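(* Let $G$ be a pro-$p$ group such that all quotients $\gamma_i(G)/\gamma_{i+1}(G)$ of its lower central series are torsion-free, and let $\varphi$ be an automorphism of $G$ of finite order that acts trivially on the abelianization $G/[G,G]$. Then $\varphi$ is the identity.
   Context: For a pro-$p$ group $G$, $\gamma_1(G)=G$ and $\gamma_{i+1}(G)=\overline{[\gamma_i(G),G]}$ (closed subgroups) denote the terms of the lower central series; $[G,G]$ denotes the closed commutator subgroup. *)

(* Defs.v *)
From mathcomp Require Import all_boot all_order.
From mathcomp Require Import all_classical all_reals all_analysis.
Set Implicit Arguments. Unset Strict Implicit. Unset Printing Implicit Defensive.
Local Open Scope classical_set_scope.

Section ProP.
Variable T : topologicalType.
Variables (mul : T -> T -> T) (inv : T -> T) (one : T).

Definition group_axioms : Prop :=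
  [/\ forall x y z, mul x (mul y z) = mul (mul x y) z,
      forall x, mul one x = x, forall x, mul x one = x,
      forall x, mul (inv x) x = one & forall x, mul x (inv x) = one].

Definition topological_group : Prop :=
  [/\ group_axioms,
      continuous (fun z : T * T => mul z.1 z.2),
      continuous inv & hausdorff_space T].

Definition is_subgroup (H : set T) : Prop :=
  [/\ H one, forall x y, H x -> H y -> H (mul x y) & forall x, H x -> H (inv x)].

Definition is_normal_subgroup (N : set T) : Prop :=
  is_subgroup N /\ forall g x, N x -> N (mul (mul (inv g) x) g).

Definition has_index (N : set T) (m : nat) : Prop :=
  exists r : 'I_m -> T, forall x, exists! i : 'I_m, N (mul (inv (r i)) x).

Definition pro_p_group (p : nat) : Prop :=
  [/\ prime p, topological_group, compact [set: T],
      totally_disconnected [set: T] &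
      forall N, open N -> is_normal_subgroup N -> exists k, has_index N (p ^ k)].

Definition gen (S : set T) : set T :=
  \bigcap_(H in [set H | is_subgroup H /\ S `<=` H]) H.

Definition commg (x y : T) : T := mul (mul (inv x) (inv y)) (mul x y).

Definition ccomm (A B : set T) : set T :=
  closure (gen [set commg a b | a in A & b in B]).

Fixpoint lcs_aux (n : nat) : set T :=
  if n is n'.+1 then ccomm (lcs_aux n') [set: T] else [set: T].

(* gamma i = gamma_i(G) for i >= 1 (gamma 1 = G, gamma 2 = [G,G]) *)
Definition gamma (i : nat) : set T := lcs_aux i.-1.

Definition gpow (x : T) (n : nat) : T := iter n (mul x) one.

Definition lcs_quotients_torsion_free : Prop :=
  forall i, (0 < i)%N -> forall x, gamma i x ->
    forall n, (0 < n)%N -> gamma i.+1 (gpow x n) -> gamma i.+1 x.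

Definition is_automorphism (phi : T -> T) : Prop :=
  [/\ forall x y, phi (mul x y) = mul (phi x) (phi y),
      continuous phi &
      exists psi : T -> T, [/\ cancel phi psi, cancel psi phi & continuous psi]].

Definition finite_order (phi : T -> T) : Prop :=
  exists n, (0 < n)%N /\ forall x, iter n phi x = x.

Definition trivial_on_abelianization (phi : T -> T) : Prop :=
  forall x, gamma 2 (mul (inv x) (phi x)).

End ProP.

(* Main.v *)
Require Import Defs.
From mathcomp Require Import all_boot all_order all_fingroup all_solvable.
From mathcomp Require Import all_classical all_reals all_analysis.

Module A.
Set Implicit Arguments. Unset Strict Implicit. Unset Printing Implicit Defensive.
Local Open Scope classical_set_scope.

Section GroupBasics.
Variable T : topologicalType.
Variables (mul : T -> T -> T) (inv : T -> T) (one : T).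
Hypothesis TG : topological_group mul inv one.

Local Notation "x ** y" := (mul x y) (at level 40, left associativity).

Let GA : group_axioms mul inv one. Proof. by case: TG. Qed.

Lemma mulA x y z : x ** (y ** z) = x ** y ** z. Proof. by case: GA. Qed.
Lemma mul1g x : one ** x = x. Proof. by case: GA. Qed.
Lemma mulg1 x : x ** one = x. Proof. by case: GA. Qed.
Lemma mulVg x : inv x ** x = one. Proof. by case: GA. Qed.
Lemma mulgV x : x ** inv x = one. Proof. by case: GA. Qed.

Lemma mulKg x y : inv x ** (x ** y) = y.
Proof. by rewrite mulA mulVg mul1g. Qed.
Lemma mulKVg x y : x ** (inv x ** y) = y.
Proof. by rewrite mulA mulgV mul1g. Qed.
Lemma mulgK x y : x ** y ** inv y = x.
Proof. by rewrite -mulA mulgV mulg1. Qed.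
Lemma mulgKV x y : x ** inv y ** y = x.
Proof. by rewrite -mulA mulVg mulg1. Qed.

Lemma mulg_injl x y z : x ** y = x ** z -> y = z.
Proof. by move=> h; rewrite -(mulKg x y) h mulKg. Qed.
Lemma mulg_injr x y z : y ** x = z ** x -> y = z.
Proof. by move=> h; rewrite -(mulgK y x) h mulgK. Qed.

Lemma inv_uniq x y : x ** y = one -> y = inv x.
Proof. by move=> h; apply: (@mulg_injl x); rewrite h mulgV. Qed.
Lemma invK x : inv (inv x) = x.
Proof. by symmetry; apply: inv_uniq; rewrite mulVg. Qed.
Lemma invM x y : inv (x ** y) = inv y ** inv x.
Proof.
by symmetry; apply: inv_uniq; rewrite mulA -(mulA x) mulgV mulg1 mulgV.
Qed.
Lemma inv1 : inv one = one.
Proof. by symmetry; apply: inv_uniq; rewrite mulg1. Qed.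
Lemma mul_eq1 x y : x ** y = one -> x = inv y.
Proof. by move=> h; apply: (@mulg_injr y); rewrite h mulVg. Qed.

Definition ghom (f : T -> T) := forall x y, f (x ** y) = f x ** f y.

Lemma ghom1 f : ghom f -> f one = one.
Proof.
move=> hf; apply: (@mulg_injl (f one)); by rewrite -hf !mulg1.
Qed.
Lemma ghomV f : ghom f -> forall x, f (inv x) = inv (f x).
Proof.
move=> hf x; apply: inv_uniq; by rewrite -hf mulgV ghom1.
Qed.

Definition cj (g x : T) := inv g ** x ** g.

Lemma cj_hom g : ghom (cj g).
Proof.
move=> x y; by rewrite /cj !mulA mulgK.
Qed.

Lemma cj_comp g h x : cj h (cj g x) = cj (g ** h) x.
Proof. by rewrite /cj invM !mulA. Qed.

Lemma cj_commg g a b : cj g (Defs.commg mul inv a b) = Defs.commg mul inv (cj g a) (cj g b).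
Proof.
rewrite /Defs.commg !cj_hom; by rewrite !(ghomV (@cj_hom g)).
Qed.

Lemma ghom_commg f a b : ghom f -> f (Defs.commg mul inv a b) = Defs.commg mul inv (f a) (f b).
Proof. by move=> hf; rewrite /Defs.commg !hf !(ghomV hf). Qed.

Lemma commgV a b : inv (Defs.commg mul inv a b) = Defs.commg mul inv b a.
Proof. by rewrite /Defs.commg !invM !invK !mulA. Qed.

Lemma sg1 H : is_subgroup mul inv one H -> H one. Proof. by case. Qed.
Lemma sgM H : is_subgroup mul inv one H -> forall x y, H x -> H y -> H (x ** y).
Proof. by case. Qed.
Lemma sgV H : is_subgroup mul inv one H -> forall x, H x -> H (inv x).
Proof. by case. Qed.
Lemma sgVE H : is_subgroup mul inv one H -> forall x, H (inv x) -> H x.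
Proof. by move=> hH x /(sgV hH); rewrite invK. Qed.
Lemma sgMl H : is_subgroup mul inv one H -> forall x y, H x -> H (x ** y) -> H y.
Proof. by move=> hH x y hx hxy; rewrite -(mulKg x y); apply: sgM => //; apply: sgV. Qed.
Lemma sgMr H : is_subgroup mul inv one H -> forall x y, H y -> H (x ** y) -> H x.
Proof. by move=> hH x y hy hxy; rewrite -(mulgK x y); apply: sgM => //; apply: sgV. Qed.

Lemma gen_subgroup S : is_subgroup mul inv one (gen mul inv one S).
Proof.
split.
- by move=> H [[]].
- by move=> x y hx hy H [hH SH]; apply: sgM => //; [apply: hx|apply: hy].
- by move=> x hx H [hH SH]; apply: sgV => //; apply: hx.
Qed.

Lemma sub_gen S : S `<=` gen mul inv one S.
Proof. by move=> x Sx H [_ SH]; apply: SH. Qed.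

Lemma gen_min S H : is_subgroup mul inv one H -> S `<=` H -> gen mul inv one S `<=` H.
Proof. by move=> hH SH x; apply. Qed.

Lemma preim_subgroup f H : ghom f -> is_subgroup mul inv one H ->
  is_subgroup mul inv one (f @^-1` H).
Proof.
move=> hf hH; split => /=.
- by rewrite ghom1 //; apply: sg1.
- by move=> x y hx hy; rewrite hf; apply: sgM.
- by move=> x hx; rewrite ghomV //; apply: sgV.
Qed.

Lemma cont_mul2 : continuous (fun z : T * T => z.1 ** z.2). Proof. by case: TG. Qed.
Lemma cont_inv : continuous inv. Proof. by case: TG. Qed.
Lemma hausT : hausdorff_space T. Proof. by case: TG. Qed.

Lemma contM (f g : T -> T) : continuous f -> continuous g -> continuous (fun x => f x ** g x).
Proof.
move=> cf cg x.
apply: (@continuous_comp _ _ _ (fun x => (f x, g x)) (fun z : T * T => z.1 ** z.2)).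
  exact: cvg_pair (cf x) (cg x).
exact: cont_mul2.
Qed.

Lemma contV (f : T -> T) : continuous f -> continuous (fun x => inv (f x)).
Proof.
move=> cf x.
apply: (@continuous_comp _ _ _ f inv); [exact: cf | exact: cont_inv].
Qed.

Lemma cont_id : continuous (fun x : T => x).
Proof. by move=> x; exact: cvg_id. Qed.

Lemma cont_cst (c : T) : continuous (fun _ : T => c).
Proof. by move=> x; exact: cvg_cst. Qed.

Lemma closure_map (f : T -> T) (A C : set T) : continuous f -> closed C ->
  (forall x, A x -> C (f x)) -> forall x, closure A x -> C (f x).
Proof.
move=> cf cC hA x hx.
have cP : closed (f @^-1` C) by move/continuous_closedP: cf; apply.
have : closure A `<=` f @^-1` C.
  by rewrite (closure_id (f @^-1` C)).1 //; apply: closureS.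
by apply.
Qed.

Lemma closure_subgroup H : is_subgroup mul inv one H ->
  is_subgroup mul inv one (closure H).
Proof.
move=> hH.
have step1 h : H h -> forall y, closure H y -> closure H (h ** y).
  move=> Hh; apply: (@closure_map (fun y => h ** y)).
  - exact (@contM (fun=> h) (fun y => y) (@cont_cst h) cont_id).
  - exact: closed_closure.
  - by move=> y Hy; apply: subset_closure; apply: sgM.
split.
- exact: subset_closure (sg1 hH).
- move=> x y hx hy.
  apply: (@closure_map (fun z => z ** y) H) hx.
  + exact (@contM (fun z => z) (fun=> y) cont_id (@cont_cst y)).
  + exact: closed_closure.
  + by move=> z Hz; apply: step1.
- move=> x; apply: (@closure_map inv H).
  + exact: cont_inv.
  + exact: closed_closure.
  + by move=> z Hz; apply: subset_closure; apply: sgV.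
Qed.

Lemma cont_cj g : continuous (cj g).
Proof.
rewrite /cj; apply: (@contM (fun x => inv g ** x) (fun=> g)); last exact: cont_cst.
exact (@contM (fun=> inv g) (fun x => x) (@cont_cst _) cont_id).
Qed.

Definition cj_inv (S : set T) := forall g x, S x -> S (cj g x).

Lemma gen_cj_inv S : cj_inv S -> cj_inv (gen mul inv one S).
Proof.
move=> hS g x hx.
have : gen mul inv one S `<=` cj g @^-1` gen mul inv one S.
  apply: gen_min; first exact: preim_subgroup (@cj_hom g) (gen_subgroup S).
  by move=> y Sy; apply: sub_gen; apply: hS.
by apply.
Qed.

Lemma closure_cj_inv S : cj_inv S -> cj_inv (closure S).
Proof.
move=> hS g; apply: closure_map; first exact: cont_cj.
  exact: closed_closure.
by move=> x Sx; apply: subset_closure; apply: hS.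
Qed.

Lemma nbhs_transl (U : set T) z : nbhs one U -> nbhs z [set x | U (inv z ** x)].
Proof.
move=> hU.
have c : continuous (fun x => inv z ** x) by exact (@contM (fun=> inv z) (fun x => x) (@cont_cst _) cont_id).
have h := c z; apply: h; by rewrite mulVg.
Qed.

Lemma subgroup_open P : is_subgroup mul inv one P ->
  (exists U, nbhs one U /\ U `<=` P) -> open P.
Proof.
move=> hP [U [hU UP]]; rewrite openE => z Pz.
rewrite /interior; apply: filterS (nbhs_transl z hU) => x /UP hx.
by rewrite -(mulKVg z x); apply: sgM.
Qed.

Lemma open_subgroup_closed P : is_subgroup mul inv one P -> open P -> closed P.
Proof.
move=> hP oP; rewrite -[P]setCK; apply: open_closedC.
rewrite openE => z nPz; rewrite /interior.
have hU : nbhs one P by apply: open_nbhs_nbhs; split => //; apply: sg1.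
apply: filterS (nbhs_transl z hU) => x hx Px; apply: nPz.
have e : inv x ** z = inv (inv z ** x) by rewrite invM invK.
by rewrite -(mulKVg x z) e; apply: sgM => //; apply: sgV.
Qed.

End GroupBasics.

End A.
Import A.

Module B.
Set Implicit Arguments. Unset Strict Implicit. Unset Printing Implicit Defensive.
Local Open Scope classical_set_scope.

Section LCS.
Variable T : topologicalType.
Variables (mul : T -> T -> T) (inv : T -> T) (one : T).
Hypothesis TG : topological_group mul inv one.

Local Notation "x ** y" := (mul x y) (at level 40, left associativity).
Local Notation L := (lcs_aux mul inv one).
Local Notation com := (Defs.commg mul inv).
Local Notation sg := (is_subgroup mul inv one).

Lemma L_props n : [/\ sg (L n), cj_inv mul inv (L n) & closed (L n)].
Proof.
elim: n => [|n [sgn cjn cln]] /=.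
  split; [by split | by [] | exact: closedT].
rewrite /ccomm; split.
- apply: (closure_subgroup TG); exact: gen_subgroup.
- apply: (closure_cj_inv TG); apply: (gen_cj_inv TG).
  move=> g _ [a La [b _ <-]]; rewrite (cj_commg TG).
  by exists (cj mul inv g a); [apply: cjn | exists (cj mul inv g b)].
- exact: closed_closure.
Qed.

Lemma L_sg n : sg (L n). Proof. by case: (L_props n). Qed.
Lemma L_cj n : cj_inv mul inv (L n). Proof. by case: (L_props n). Qed.
Lemma L_closed n : closed (L n). Proof. by case: (L_props n). Qed.

Lemma L_comm n a b : L n a -> L n.+1 (com a b).
Proof.
move=> La /=; rewrite /ccomm; apply: subset_closure; apply: sub_gen.
by exists a => //; exists b.
Qed.

Lemma L_sub n : L n.+1 `<=` L n.
Proof.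
move=> x /=; rewrite /ccomm => hx.
rewrite (closure_id (L n)).1; last exact: L_closed.
apply: (closureS _ hx).
- apply: gen_min => //; first exact: L_sg.
  move=> _ [a La [b _ <-]]; rewrite /Defs.commg -(mulA TG).
  apply: sgM; first exact: L_sg.
    by apply: sgV => //; exact: L_sg.
  have -> : inv b ** (a ** b) = cj mul inv b a by rewrite /cj (mulA TG).
  exact: L_cj.
Qed.

End LCS.

End B.
Import B.

Module B2.
Set Implicit Arguments. Unset Strict Implicit. Unset Printing Implicit Defensive.
Local Open Scope classical_set_scope.

Section Main.
Variable T : topologicalType.
Variables (mul : T -> T -> T) (inv : T -> T) (one : T).
Hypothesis TG : topological_group mul inv one.
Variable phi : T -> T.
Hypothesis phiM : forall x y, phi (mul x y) = mul (phi x) (phi y).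
Hypothesis phiC : continuous phi.

Local Notation "x ** y" := (mul x y) (at level 40, left associativity).
Local Notation L := (lcs_aux mul inv one).
Local Notation com := (Defs.commg mul inv).
Local Notation sg := (is_subgroup mul inv one).

Let mulA := A.mulA TG.
Let mulKg := A.mulKg TG.
Let mulKVg := A.mulKVg TG.
Let mulgK := A.mulgK TG.
Let mulgKV := A.mulgKV TG.
Let invM := A.invM TG.
Let invK := A.invK TG.
Let inv1 := A.inv1 TG.
Let mul1g := A.mul1g TG.
Let mulg1 := A.mulg1 TG.
Let mulVg := A.mulVg TG.
Let mulgV := A.mulgV TG.
Let hphi : ghom mul phi := phiM.
Let phiV := ghomV TG hphi.
Let phi1 := ghom1 TG hphi.
Unset Implicit Arguments.
Let Lsg n := @L_sg _ _ _ _ TG n.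
Let Lcj n := @L_cj _ _ _ _ TG n.
Let Lcl n := @L_closed _ _ _ _ TG n.
Set Implicit Arguments.

Section Step.
Variable k : nat.
Local Notation G := (L k.+1).
Local Notation N := (L k.+2).
Hypothesis Pk : forall g, G (inv g ** phi g).

Definition eqm u v := N (inv u ** v).

Lemma eqm_refl u : eqm u u.
Proof. by rewrite /eqm mulVg; apply: (sg1 (Lsg _)). Qed.

Lemma eqm_sym u v : eqm u v -> eqm v u.
Proof.
rewrite /eqm => h; have -> : inv v ** u = inv (inv u ** v) by rewrite invM invK.
exact: (sgV (Lsg _)).
Qed.

Lemma eqm_trans u v w : eqm u v -> eqm v w -> eqm u w.
Proof.
rewrite /eqm => h1 h2; have -> : inv u ** w = (inv u ** v) ** (inv v ** w).
  by rewrite -mulA mulKVg.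
by apply: (sgM (Lsg _)).
Qed.

Lemma eqm_mull w u v : eqm u v -> eqm (w ** u) (w ** v).
Proof. by rewrite /eqm invM -mulA mulKg. Qed.

Lemma eqmN u : N u -> eqm one u.
Proof. by rewrite /eqm inv1 mul1g. Qed.

Definition cen c := forall z, eqm (c ** z) (z ** c).

Lemma cenG c : G c -> cen c.
Proof.
move=> Gc z; rewrite /eqm invM.
have -> : inv z ** inv c ** (z ** c) = com z c by [].
rewrite -(commgV TG); apply: (sgV (Lsg _)).
exact: L_comm.
Qed.

Lemma eqm_ctx u c v : cen c -> eqm (u ** c ** v) (u ** v ** c).
Proof. by move=> hc; rewrite -!mulA; apply: eqm_mull; apply: hc. Qed.

Lemma com_cong x g a b : G a -> G b -> eqm (com x g) (com (x ** a) (g ** b)).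
Proof.
move=> Ga Gb.
have GV : forall y, G y -> G (inv y) by move=> y; apply: (sgV (Lsg _)).
have E0 : com (x ** a) (g ** b) =
   inv a ** (inv x ** inv b ** inv g ** x ** a ** g ** b).
  by rewrite /Defs.commg !invM !mulA.
have S1 : eqm (com (x ** a) (g ** b))
              (inv x ** inv b ** inv g ** x ** a ** g ** b ** inv a).
  by rewrite E0; apply: cenG; apply: GV.
have S2 : eqm (inv x ** inv b ** inv g ** x ** a ** g ** b ** inv a)
              (inv x ** inv g ** x ** a ** g ** b ** inv a ** inv b).
  have := @eqm_ctx (inv x) _ (inv g ** x ** a ** g ** b ** inv a) (cenG (GV _ Gb)).
  by rewrite !mulA.
have S3 : eqm (inv x ** inv g ** x ** a ** g ** b ** inv a ** inv b)
              (inv x ** inv g ** x ** g ** b ** inv a ** inv b ** a).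
  have := @eqm_ctx (inv x ** inv g ** x) _ (g ** b ** inv a ** inv b) (cenG Ga).
  by rewrite !mulA.
have S4 : eqm (inv x ** inv g ** x ** g ** b ** inv a ** inv b ** a)
              (inv x ** inv g ** x ** g ** b ** inv b ** a ** inv a).
  have := @eqm_ctx (inv x ** inv g ** x ** g ** b) _ (inv b ** a) (cenG (GV _ Ga)).
  by rewrite !mulA.
have E5 : inv x ** inv g ** x ** g ** b ** inv b ** a ** inv a = com x g.
  by rewrite !mulgK /Defs.commg !mulA.
apply: eqm_sym; rewrite -E5.
apply: eqm_trans S1 _; apply: eqm_trans S2 _; by apply: eqm_trans S3 _.
Qed.

Lemma stepQ y : G y -> N (inv y ** phi y).
Proof.
move=> Gy.
have cf : continuous (fun y => inv y ** phi y).
  exact (@contM _ _ _ _ TG (fun y => inv y) phi (@contV _ _ _ _ TG (fun y => y) (@cont_id T)) phiC).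
have sgH : sg [set y | N (inv y ** phi y)].
  split.
  - change (N (inv one ** phi one)).
    by rewrite phi1 inv1 mul1g; apply: (sg1 (Lsg k.+2)).
  - move=> y0 z hy hz; change (N (inv (y0 ** z) ** phi (y0 ** z))); rewrite phiM.
    have -> : inv (y0 ** z) ** (phi y0 ** phi z) =
              cj mul inv z (inv y0 ** phi y0) ** (inv z ** phi z).
      by rewrite /cj invM !mulA mulgK.
    apply: (sgM (Lsg k.+2)); first exact: (Lcj k.+2 z (inv y0 ** phi y0) hy).
    exact: hz.
  - move=> y0 hy; change (N (inv (inv y0) ** phi (inv y0))); rewrite phiV invK.
    have -> : y0 ** inv (phi y0) = cj mul inv (inv y0) (inv (inv y0 ** phi y0)).
      by rewrite /cj invM !invK !mulA mulgK.
    apply: (Lcj k.+2); exact: (sgV (Lsg k.+2) (x:=inv y0 ** phi y0) hy).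
have key : forall x, gen mul inv one [set com a b | a in L k & b in [set: T]] x ->
    N (inv x ** phi x).
  apply: gen_min => //.
  move=> _ [x _ [g _ <-]].
  rewrite /= (@ghom_commg _ _ _ _ TG phi x g hphi).
  have := @com_cong x g _ _ (@Pk x) (@Pk g).
  by rewrite !mulKVg.
exact (@closure_map T (fun y => inv y ** phi y) _ N cf (Lcl _) key y Gy).
Qed.

Lemma stepP n : (0 < n)%N -> (forall x, iter n phi x = x) ->
  lcs_quotients_torsion_free mul inv one -> forall g, N (inv g ** phi g).
Proof.
move=> n0 hn tf g.
set c := inv g ** phi g.
have Gc : G c := @Pk g.
have phig : phi g = g ** c by rewrite /c mulKVg.
have NG : N `<=` G by exact: L_sub.
have claim : forall m, exists d, [/\ iter m phi g = g ** d, G d & eqm d (gpow mul one c m)].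
  elim=> [|m [d [e Gd hd]]].
    exists one; split; [by rewrite mulg1 | exact: (sg1 (Lsg _)) | exact: eqm_refl].
  exists (c ** phi d); split.
  - by rewrite /= e phiM phig mulA.
  - apply: (sgM (Lsg _)) => //.
    have -> : phi d = d ** (inv d ** phi d) by rewrite mulKVg.
    by apply: (sgM (Lsg _)); [exact: Gd | apply: NG; exact: stepQ].
  - rewrite /=; apply: eqm_mull; apply: eqm_trans hd.
    by apply: eqm_sym; apply: stepQ.
have [d [e Gd hd]] := claim n.
have d1 : d = one.
  by apply: (@A.mulg_injl _ _ _ _ TG g); rewrite -e hn mulg1.
move: hd; rewrite d1 /eqm inv1 mul1g => hcn.
by apply: (tf k.+2 isT c Gc n n0 hcn).
Qed.

End Step.

Lemma all_L n : (0 < n)%N -> (forall x, iter n phi x = x) ->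
  lcs_quotients_torsion_free mul inv one ->
  trivial_on_abelianization mul inv one phi ->
  forall k g, L k.+1 (inv g ** phi g).
Proof.
move=> n0 hn tf ht; elim=> [|k IH] g; first exact: ht.
exact: (stepP IH n0 hn tf).
Qed.

End Main.

End B2.
Import B2.

Module C.
Set Implicit Arguments. Unset Strict Implicit. Unset Printing Implicit Defensive.
Local Open Scope classical_set_scope.

Section ZeroDim.
Variable T : topologicalType.
Hypothesis hT : hausdorff_space T.
Hypothesis cT : compact [set: T].
Hypothesis tdT : totally_disconnected [set: T].

Lemma zero_dim (x y : T) : x <> y -> exists U : set T, [/\ clopen U, U x & ~ U y].
Proof.
move=> xy; apply: contrapT => hn.
have H : forall U : set T, clopen U -> U x -> U y.
  move=> U cU Ux; apply: contrapT => nUy; apply: hn; by exists U.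
pose Dx := [set U : set T | clopen U /\ U x].
pose Q := \bigcap_(U in Dx) U.
have Qx : Q x by move=> U [].
have Qy : Q y by move=> U [cU Ux]; exact: H.
have Qcl : closed Q by apply: closed_bigI => U [[]].
have claim : forall A1 A2 : set T, closed A1 -> closed A2 ->
    (forall z, A1 z -> A2 z -> False) -> Q `<=` A1 `|` A2 -> A1 x ->
    forall z, Q z -> A2 z -> False.
  move=> A1 A2 cA1 cA2 dis QA Ax.
  have sn : set_nbhs A1 (~` A2).
    apply/set_nbhsP; exists (~` A2); split; [exact: closed_openC | move=> z A1z A2z; exact: dis z A1z A2z | by []].
  have [i /set_nbhsP [U [oU A1U Ui]] cli] := compact_normal hT cT cA1 sn.
  pose V := ~` closure U.
  have oV : open V by apply: closed_openC; exact: closed_closure.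
  have A2V : A2 `<=` V.
    move=> z A2z clz; apply: (cli z) => //.
    by apply: (closure_subset Ui).
  have UV : forall z, U z -> V z -> False.
    by move=> z Uz; apply; apply: subset_closure.
  pose K := ~` (U `|` V).
  have cK : compact K.
    apply: (subclosed_compact _ cT) => //.
    by apply: open_closedC; apply: openU.
  have [D [[oD cD] Dx'] DK] : exists D, [/\ clopen D, D x & forall z, D z -> K z -> False].
    apply: contrapT => nD.
    pose F := filter_from Dx (fun D => D `&` K).
    have FF : Filter F.
      apply: filter_from_filter; first by exists setT; split => //; exact: clopenT.
      move=> D1 D2 [c1 x1] [c2 x2]; exists (D1 `&` D2).
        by split; [exact: clopenI | split].
      by move=> z [[z1 z2] zK]; split; split.
    have PF : ProperFilter F.
      apply: filter_from_proper => D [c1 x1].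
      apply: contrapT => /set0P/negP; rewrite negbK => /eqP e.
      apply: nD; exists D; split => // z Dz Kz.
      by have : (D `&` K) z by []; rewrite e.
    have FK : F K by exists setT; [split => //; exact: clopenT | move=> z []].
    have [z [Kz clz]] := cK F PF FK.
    have Qz : Q z.
      move=> D [[oD cD] Dx']; apply: contrapT => nDz.
      have nb : nbhs z (~` D) by apply: open_nbhs_nbhs; split => //; exact: closed_openC.
      have FD : F (D `&` K) by exists D.
      have [w [[Dw _] nDw]] := clz _ _ FD nb.
      exact: nDw Dw.
    by case: (QA z Qz) => h; apply: Kz; [left; apply: A1U | right; apply: A2V].
  pose E := D `&` U.
  have EQ : E = D `&` ~` V.
    apply/seteqP; split => z [Dz h]; split => //.
      by move=> Vz; exact: UV z h Vz.
    by case: (pselect (U z)) => // nUz; exfalso; apply: (DK z Dz); move=> [].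
  have cE : clopen E.
    split; first exact: openI.
    rewrite EQ; apply: closedI => //; exact: open_closedC.
  have QE : Q `<=` E by move=> z Qz; apply: Qz; split => //; split => //; apply: A1U.
  by move=> z Qz A2z; have [_ Uz] := QE z Qz; exact: UV z Uz (A2V z A2z).
have conQ : connected Q.
  move=> B [b Bb] [C1 oC1 eB1] [C2 cC2 eB2].
  have BC1 : forall w, B w -> C1 w by move=> w; rewrite eB1 => -[].
  have BQ : forall w, B w -> Q w by move=> w; rewrite eB1 => -[].
  have QC2B : forall w, Q w -> C2 w -> B w by move=> w Qw C2w; rewrite eB2.
  have QC1B : forall w, Q w -> C1 w -> B w by move=> w Qw C1w; rewrite eB1.
  case: (pselect (B x)) => Bx.
  - apply/seteqP; split; first by move=> z /BQ.
    move=> z Qz; apply: contrapT => nBz.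
    apply: (claim (Q `&` C2) (Q `&` ~` C1) _ _ _ _ _ z Qz).
    + exact: closedI.
    + by apply: closedI => //; exact: open_closedC.
    + by move=> w [Qw C2w] [_ nC1w]; apply: nC1w; apply: BC1; apply: QC2B.
    + move=> w Qw; case: (pselect (C1 w)) => h.
        left; split => //; have : B w by apply: QC1B.
        by rewrite eB2 => -[].
      by right.
    + split => //; have : B x by [].
      by rewrite eB2 => -[].
    + by split => // C1z; apply: nBz; apply: QC1B.
  - exfalso.
    apply: (claim (Q `&` ~` C1) (Q `&` C2) _ _ _ _ _ b (BQ b Bb)).
    + by apply: closedI => //; exact: open_closedC.
    + exact: closedI.
    + by move=> w [Qw nC1w] [_ C2w]; apply: nC1w; apply: BC1; apply: QC2B.
    + move=> w Qw; case: (pselect (C1 w)) => h.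
        right; split => //; have : B w by apply: QC1B.
        by rewrite eB2 => -[].
      by left.
    + by split => // C1x; apply: Bx; apply: QC1B.
    + by have : B b by []; rewrite {1}eB2.
have := connected_component_max (A := [set: T]) Qx (fun _ _ => I) conQ Qy.
by rewrite (@tdT x I) => e; apply: xy; rewrite e.
Qed.

End ZeroDim.

End C.
Import C.

Module D.
Set Implicit Arguments. Unset Strict Implicit. Unset Printing Implicit Defensive.
Local Open Scope classical_set_scope.

Lemma tube (T : topologicalType) (f : T -> T -> T) (K O : set T) (e : T) :
  compact K ->
  (forall k, K k -> exists A B, [/\ nbhs k A, nbhs e B &
       forall a b, A a -> B b -> O (f a b)]) ->
  exists V, [/\ open V, V e & forall k v, K k -> V v -> O (f k v)].
Proof.
move=> cK hK; apply: contrapT => hn.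
pose DV := [set V : set T | open V /\ V e].
pose S := fun V : set T => [set k | K k /\ exists v, V v /\ ~ O (f k v)].
pose F := filter_from DV S.
have FF : Filter F.
  apply: filter_from_filter; first by exists setT; split => //; exact: openT.
  move=> W1 W2 [p1 q1] [p2 q2]; exists (W1 `&` W2); first by split; [exact: openI | split].
  by move=> k [Kk [v [[v1 v2] nO]]]; split; split => //; exists v.
have PF : ProperFilter F.
  apply: filter_from_proper => V [oV eV].
  apply: contrapT => hne.
  apply: hn; exists V; split => // k v Kk Vv; apply: contrapT => nO.
  by apply: hne; exists k; split => //; exists v.
have FK : F K by exists setT; [split => //; exact: openT | move=> k []].
have [z [Kz clz]] := cK F PF FK.
have [A [B [hA hB hAB]]] := hK z Kz.
move: hB; rewrite nbhsE => -[B' [oB' eB'] B'B].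
have FS : F (S B') by exists B'.
have [k [[Kk [v [B'v nO]]] Ak]] := clz _ _ FS hA.
by apply: nO; apply: hAB => //; apply: B'B.
Qed.

Section OpenNormal.
Variable T : topologicalType.
Variables (mul : T -> T -> T) (inv : T -> T) (one : T).
Hypothesis TG : topological_group mul inv one.
Hypothesis cT : compact [set: T].
Local Notation "x ** y" := (mul x y) (at level 40, left associativity).
Local Notation sg := (is_subgroup mul inv one).

Lemma mul_nbhs a b (O : set T) : nbhs (a ** b) O ->
  exists A B, [/\ nbhs a A, nbhs b B & forall x y, A x -> B y -> O (x ** y)].
Proof.
move=> hO; have := @cont_mul2 _ _ _ _ TG (a, b) O hO.
move=> [[P1 P2] /= [h1 h2] sub]; exists P1, P2; split => // x y p1 p2.
by have := sub (x, y); apply.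
Qed.

Lemma inv_nbhs a (O : set T) : nbhs (inv a) O -> nbhs a [set x | O (inv x)].
Proof. by move=> hO; have := @cont_inv _ _ _ _ TG a O hO. Qed.

Lemma open_normal_in (D : set T) : clopen D -> D one ->
  exists N, [/\ open N, is_normal_subgroup mul inv one N & N `<=` D].
Proof.
move=> [oD cD] D1.
have mulg1 := A.mulg1 TG; have mul1g := A.mul1g TG; have mulVg := A.mulVg TG.
have [W [oW W1 hW]] : exists W, [/\ open W, W one & forall d w, D d -> W w -> D (d ** w)].
  apply: (@tube T mul D D one).
    exact: (subclosed_compact cD cT).
  move=> k Dk; apply: mul_nbhs; rewrite mulg1.
  by apply: open_nbhs_nbhs; split.
have [V0 [oV0 V01 hV0]] : exists V0, [/\ open V0, V0 one &
    forall g v, [set: T] g -> V0 v -> W (cj mul inv g v)].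
  apply: (@tube T (cj mul inv) [set: T] W one cT).
  move=> k _.
  have h0 : nbhs (inv k ** one ** k) W.
    by rewrite mulg1 mulVg; apply: open_nbhs_nbhs; split.
  have [A1 [A2 [hA1 hA2 hA12]]] := mul_nbhs h0.
  have [A3 [B [hA3 hB hA3B]]] := mul_nbhs hA1.
  have hA4 := inv_nbhs hA3.
  exists (A2 `&` [set x | A3 (inv x)]), B; split => //.
    exact: filterI.
  move=> a b [a2 a4] Bb; rewrite /cj.
  by apply: hA12 => //; apply: hA3B.
pose V := V0 `&` [set x | V0 (inv x)].
have nV : nbhs one V.
  apply: filterI; first by apply: open_nbhs_nbhs; split.
  apply: inv_nbhs; rewrite (A.inv1 TG); by apply: open_nbhs_nbhs; split.
pose G0 := [set x | exists g v, V v /\ x = cj mul inv g v].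
pose N := gen mul inv one G0.
have sgN : sg N by exact: gen_subgroup.
have VN : V `<=` N.
  move=> v Vv; apply: sub_gen; exists one, v; split => //.
  by rewrite /cj (A.inv1 TG) mul1g mulg1.
exists N; split.
- apply: (subgroup_open TG sgN); by exists V.
- split => //; apply: (gen_cj_inv TG).
  move=> h _ [g [v [Vv ->]]]; exists (g ** h), v; split => //.
  by rewrite (cj_comp TG).
- pose M := [set x | forall d, D d -> D (d ** x) /\ D (d ** inv x)].
  have sgM : sg M.
    split.
    + move=> d Dd; by rewrite (A.inv1 TG) mulg1.
    + move=> x y Mx My d Dd; rewrite (A.invM TG) !(A.mulA TG); split.
        by apply: (My _ (Mx _ Dd).1).1.
      by apply: (Mx _ (My _ Dd).2).2.
    + by move=> x Mx d Dd; rewrite (A.invK TG); split; [apply: (Mx d Dd).2 | apply: (Mx d Dd).1].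
  have NM : N `<=` M.
    apply: gen_min => // _ [g [v [[V0v V0iv] ->]]] d Dd; split.
      by apply: hW => //; apply: hV0.
    rewrite -(ghomV TG (@cj_hom _ _ _ _ TG g)).
    by apply: hW => //; apply: hV0.
  by move=> x /NM /(_ one D1) [+ _]; rewrite mul1g.
Qed.

End OpenNormal.

End D.
Import D.

Module E.
Set Implicit Arguments. Unset Strict Implicit. Unset Printing Implicit Defensive.
Local Open Scope classical_set_scope.

Section FiniteQuot.
Variable T : topologicalType.
Variables (mul : T -> T -> T) (inv : T -> T) (one : T).
Hypothesis TG : topological_group mul inv one.
Local Notation "x ** y" := (mul x y) (at level 40, left associativity).
Local Notation sg := (is_subgroup mul inv one).
Variable N : set T.
Hypothesis oN : open N.
Hypothesis nN : is_normal_subgroup mul inv one N.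
Variable m : nat.
Variable r : 'I_m -> T.
Hypothesis hr : forall x, exists! i : 'I_m, N (inv (r i) ** x).

Let sgN : sg N. Proof. by case: nN. Qed.
Let cjN g x : N x -> N (inv g ** x ** g). Proof. by case: nN => _; apply. Qed.

Let mulA := A.mulA TG.
Let mulKg := A.mulKg TG.
Let mulKVg := A.mulKVg TG.
Let mulgK := A.mulgK TG.
Let mulgKV := A.mulgKV TG.
Let invM := A.invM TG.
Let invK := A.invK TG.
Let inv1 := A.inv1 TG.
Let mul1g := A.mul1g TG.
Let mulg1 := A.mulg1 TG.
Let mulVg := A.mulVg TG.
Let mulgV := A.mulgV TG.

Let hr' x : exists i, N (inv (r i) ** x).
Proof. by have [i [hi _]] := hr x; exists i. Qed.

Definition idx x : 'I_m := proj1_sig (cid (hr' x)).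
Lemma idxP x : N (inv (r (idx x)) ** x). Proof. exact: (proj2_sig (cid (hr' x))). Qed.

Lemma idx_uniq x i : N (inv (r i) ** x) -> idx x = i.
Proof.
move=> hi; have [i0 [_ u]] := hr x.
by rewrite -(u _ hi) (u _ (idxP x)).
Qed.

Lemma idx_eq x y : N (inv x ** y) -> idx x = idx y.
Proof.
move=> hxy; symmetry; apply: idx_uniq.
rewrite -(mulKVg x y) mulA; apply: (sgM sgN) => //; exact: idxP.
Qed.

Lemma idx_eqE x y : idx x = idx y -> N (inv x ** y).
Proof.
move=> e.
have -> : inv x ** y = inv (inv (r (idx x)) ** x) ** (inv (r (idx y)) ** y).
  by rewrite invM invK e -mulA mulKVg.
by apply: (sgM sgN); [apply: (sgV sgN); exact: idxP | exact: idxP].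
Qed.

Lemma idx_r i : idx (r i) = i.
Proof. by apply: idx_uniq; rewrite mulVg; exact: (sg1 sgN). Qed.

Definition act g (i : 'I_m) : 'I_m := idx (inv g ** r i).

Lemma act_inj g : injective (act g).
Proof.
move=> i j /idx_eqE; rewrite invM invK -mulA mulKVg => h.
by rewrite -(idx_r i) -(idx_r j); apply: idx_eq.
Qed.

Definition rho g : {perm 'I_m} := perm (@act_inj g).

Lemma rhoM g h : rho (g ** h) = (rho g * rho h)%g.
Proof.
apply/permP => i; rewrite permM !permE /act.
apply: idx_eq; set z := inv g ** r i.
have -> : inv (g ** h) ** r i = inv h ** z by rewrite /z invM mulA.
rewrite invM invK -mulA mulKVg.
have -> : inv z ** r (idx z) = inv (inv (r (idx z)) ** z) by rewrite invM invK.
apply: (sgV sgN); exact: idxP.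
Qed.

Lemma rho1E g : rho g = 1%g <-> N g.
Proof.
split=> [e|Ng].
  pose r0 := r (idx one).
  have Nr0 : N r0.
    have := idxP one; rewrite mulg1 => h; rewrite -(invK r0).
    exact: (sgV sgN).
  have := f_equal (fun s : {perm 'I_m} => s (idx one)) e.
  rewrite /= perm1 /rho permE /act -{2}(idx_r (idx one)) -/r0 => /idx_eqE.
  rewrite invM invK => h.
  have -> : g = r0 ** (inv r0 ** g ** r0) ** inv r0 by rewrite !mulA mulgK mulgV mul1g.
  apply: (sgM sgN); last exact: (sgV sgN Nr0).
  by apply: (sgM sgN).
apply/permP => i; rewrite perm1 permE /act.
rewrite -{2}(idx_r i); apply: idx_eq.
rewrite invM invK; exact: cjN.
Qed.

Lemma rho1 : rho one = 1%g.
Proof. by apply/rho1E; exact: (sg1 sgN). Qed.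

Lemma rhoV g : rho (inv g) = ((rho g)^-1)%g.
Proof.
have := rhoM g (inv g); rewrite mulgV rho1 => h.
by rewrite -(monoid.mulKg (rho g) (rho (inv g))) -h monoid.mulg1.
Qed.

Definition Gs : {set {perm 'I_m}} := [set s | `[< exists g, rho g = s >]].

Lemma Gs_group : group_set Gs.
Proof.
apply/group_setP; split.
  by rewrite inE; apply/asboolP; exists one; exact: rho1.
move=> s t; rewrite !inE => hs ht.
case: hs => g eg; case: ht => h eh.
by exists (g ** h); rewrite rhoM eg eh.
Qed.

Canonical Gs_grp := Group Gs_group.

Lemma rhoGs g : rho g \in Gs.
Proof. by rewrite inE; apply/asboolP; exists g. Qed.

Lemma card_Gs : #|Gs| = m.
Proof.
have -> : Gs = [set rho (r i) | i : 'I_m].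
  apply/setP => s; apply/idP/imsetP.
    rewrite inE => /asboolP [g <-]; exists (idx g) => //.
    have h : rho (inv g ** r (idx g)) = 1%g.
      by apply/rho1E; apply: idx_eqE; rewrite idx_r.
    by rewrite -(mulKVg g (r (idx g))) rhoM h monoid.mulg1.
  by move=> [i _ ->]; exact: rhoGs.
rewrite card_imset ?card_ord //.
move=> i j /= e.
have : rho (inv (r i) ** r j) = 1%g by rewrite rhoM rhoV e monoid.mulVg.
by move/rho1E => h; rewrite -(idx_r i) -(idx_r j); apply: idx_eq.
Qed.

Variables p k : nat.
Hypothesis pp : prime p.
Hypothesis mk : m = (p ^ k)%N.

Lemma Gs_nil : exists n, ('L_n.+1(Gs))%g = 1%g.
Proof.
apply/lcnP; apply: (@pgroup_nil _ p).
by rewrite /pgroup card_Gs mk pnatX pnat_id.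
Qed.

Lemma lcs_map j x : lcs_aux mul inv one j x -> rho x \in ('L_j.+1(Gs))%g.
Proof.
elim: j x => [|j IH] x hx; first exact: rhoGs.
pose P := [set y | rho y \in ('L_j.+2(Gs))%g].
have sgP : sg P.
  split.
  - by rewrite /P /= rho1 group1.
  - by move=> y z hy hz; rewrite /P /= rhoM groupM.
  - by move=> y hy; rewrite /P /= rhoV groupV.
have NP : N `<=` P.
  by move=> y /rho1E e; rewrite /P /= e group1.
have oP : open P.
  apply: (subgroup_open TG sgP); exists N; split => //.
  by apply: open_nbhs_nbhs; split => //; exact: (sg1 sgN).
have cP : closed P := open_subgroup_closed TG sgP oP.
have : P x; last by [].
move: hx => /=; rewrite /ccomm => hx.
rewrite (closure_id P).1 //; apply: (closureS _ hx).
apply: gen_min => //.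
move=> _ [a ha [b _ <-]].
rewrite /P /= /Defs.commg !rhoM !rhoV.
have -> : ((rho a)^-1 * (rho b)^-1 * (rho a * rho b))%g = ([~ rho a, rho b])%g.
  by rewrite /commg /conjg !monoid.mulgA.
rewrite lcnSn; apply: mem_commg; [exact: IH | exact: rhoGs].
Qed.

Lemma lcs_in_N : exists n, lcs_aux mul inv one n `<=` N.
Proof.
have [n hn] := Gs_nil; exists n => x hx.
have := lcs_map hx; rewrite hn inE => /eqP.
by move/rho1E.
Qed.

End FiniteQuot.

End E.
Import E.

Local Open Scope classical_set_scope.

Theorem lemma6p1 (T : topologicalType) (mul : T -> T -> T) (inv : T -> T) (one : T)
  (p : nat) (phi : T -> T) :
  pro_p_group mul inv one p ->
  lcs_quotients_torsion_free mul inv one ->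
  is_automorphism mul phi ->
  finite_order phi ->
  trivial_on_abelianization mul inv one phi ->
  forall x, phi x = x.
Proof.
move=> [pp TG cT tdT hidx] tf [phiM phiC _] [n [n0 hn]] ht x.
set c := mul (inv x) (phi x).
suff c1 : c = one.
  by rewrite -(A.mulKVg TG x (phi x)) -/c c1 (A.mulg1 TG).
apply: contrapT => c1.
have [D [cD D1 nDc]] := zero_dim (hausT TG) cT tdT (fun e => c1 (esym e)).
have [N [oN nN ND]] := open_normal_in TG cT cD D1.
have [k [r hr]] := hidx N oN nN.
have [m hm] := lcs_in_N TG oN nN hr pp (erefl _).
have hc : lcs_aux mul inv one m.+1 c := @all_L _ _ _ _ TG phi phiM phiC n n0 hn tf ht m x.
apply: nDc; apply: ND; apply: hm.
exact: (L_sub TG hc).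
Qed.
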